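(* Let $\sigma$ be an $(\alpha,\beta)$-ReLU activation applied entrywise. For every $h\in\mathbb R^n$, $\mathrm{Dir}(\sigma(h))+\mathrm{Dir}(\sigma(-h))\le(\alpha^2+\beta^2)\,\mathrm{Dir}(h)$.
   Context: An activation $\sigma:\mathbb R\to\mathbb R$ is $(\alpha,\beta)$-ReLU if $\sigma(x)=\alpha x$ for $x\ge0$ and $\sigma(x)=\beta x$ for $x<0$, where $\alpha,\beta\ge0$ are not both $0$. Let $\mathcal G=(\mathcal V,\mathcal E)$ be a finite undirected graph with $n$ nodes, adjacency matrix $A$, degree matrix $D=\mathrm{diag}(A\mathbf 1_n)$ with degrees $d_i$, $\tilde A=A+I$, $\tilde D=D+I$, $\hat A=\tilde D^{-1/2}\tilde A\tilde D^{-1/2}$, $\hat L=I-\hat A$. For $x\in\mathbb R^n$, $\mathrm{Dir}(x)=x^\top\hat Lx=\sum_{\{i,j\}\in\mathcal E}(x_i/\sqrt{1+d_i}-x_j/\sqrt{1+d_j})^2$. *)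

(* Defs.v *)
From HB Require Import structures.
From mathcomp Require Import all_boot all_order all_algebra.
Set Implicit Arguments. Unset Strict Implicit. Unset Printing Implicit Defensive.
Import Order.TTheory GRing.Theory Num.Theory.
Local Open Scope ring_scope.

Definition simple_graph (n : nat) (e : rel 'I_n) : Prop :=
  (forall i j, e i j = e j i) /\ (forall i, ~~ e i i).

Section Defs.
Variable R : rcfType.
Variable n : nat.
Variable e : rel 'I_n.

Definition adjA : 'M[R]_n := \matrix_(i, j) (e i j)%:R.
Definition deg (i : 'I_n) : R := \sum_j adjA i j.
Definition adjAt : 'M[R]_n := adjA + 1%:M.
Definition degDt : 'M[R]_n := \matrix_(i, j) ((i == j)%:R * (deg i + 1)).
Definition degDt_isqrt : 'M[R]_n :=
  \matrix_(i, j) ((i == j)%:R * (Num.sqrt (deg i + 1))^-1).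
Definition adjAhat : 'M[R]_n := degDt_isqrt *m adjAt *m degDt_isqrt.
Definition Lhat : 'M[R]_n := 1%:M - adjAhat.
Definition Dir (x : 'cV[R]_n) : R := (x^T *m Lhat *m x) ord0 ord0.
End Defs.

Definition abReLU (R : realDomainType) (alpha beta : R) (x : R) : R :=
  if 0 <= x then alpha * x else beta * x.

(* Main.v *)
Require Import Defs.
From mathcomp Require Import all_boot all_order all_algebra.
From mathcomp Require Import ring lra.
Import Order.TTheory GRing.Theory Num.Theory.
Local Open Scope ring_scope.

Definition sc {R : rcfType} {n : nat} (e : rel 'I_n) (i : 'I_n) : R :=
  (Num.sqrt (@deg R n e i + 1))^-1.

Lemma sumdiag (R : rcfType) n (f : 'I_n -> R) i : \sum_j f j * (i == j)%:R = f i.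
Proof.
rewrite (bigD1 i) //= eqxx mulr1 big1 ?addr0 // => j ji.
by rewrite eq_sym (negbTE ji) mulr0.
Qed.

Lemma LhatE (R : rcfType) n (e : rel 'I_n) i j :
  Lhat R e i j = (i==j)%:R - sc e i * sc e j * ((e i j)%:R + (i==j)%:R).
Proof.
rewrite /Lhat /adjAhat !mxE.
rewrite (bigD1 j) //= big1 => [|k kj]; last by rewrite [X in _ * X]mxE (negbTE kj) mul0r mulr0.
rewrite addr0 [X in X * _]mxE.
rewrite (bigD1 i) //= big1 => [|k ki]; last by rewrite [X in X * _]mxE eq_sym (negbTE ki) !mul0r.
rewrite addr0 !mxE !eqxx /sc /=; ring.
Qed.

Lemma DirE (R : rcfType) n (e : rel 'I_n) (x : 'cV[R]_n) :
  Dir e x = \sum_i \sum_j x i 0 * Lhat R e i j * x j 0.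
Proof.
rewrite /Dir mxE exchange_big /=; apply eq_bigr => i _.
rewrite mxE big_distrl /=; apply eq_bigr => k _.
by rewrite mxE.
Qed.

Lemma key (R : rcfType) n (e : rel 'I_n) (Hg : simple_graph e) (x : 'cV[R]_n) :
  Dir e x *+ 2 = \sum_i \sum_j (e i j)%:R * (sc e i * x i 0 - sc e j * x j 0) ^+ 2.
Proof.
have Hd i : deg R e i = \sum_j (e i j)%:R.
  by rewrite /deg; apply eq_bigr => j _; rewrite mxE.
have Hs i : sc e i ^+ 2 * deg R e i = 1 - sc e i ^+ 2.
  have h0 : 0 <= deg R e i by rewrite Hd; apply: sumr_ge0 => j _; apply: ler0n.
  have h1 : deg R e i + 1 != 0 by rewrite gt_eqF // ltr_wpDl.
  rewrite /sc exprVn sqr_sqrtr ?addr_ge0 //.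
  by field.
have E1 : Dir e x = \sum_i (x i 0 ^+ 2 * (1 - sc e i ^+ 2))
     - \sum_i \sum_j (e i j)%:R * (sc e i * sc e j * x i 0 * x j 0).
  rewrite DirE -sumrB; apply eq_bigr => i _.
  transitivity (\sum_j ((x i 0 * x j 0 - sc e i * sc e j * x i 0 * x j 0) * (i == j)%:R)
     - \sum_j (e i j)%:R * (sc e i * sc e j * x i 0 * x j 0)).
    by rewrite -sumrB; apply eq_bigr => j _; rewrite LhatE; ring.
  by rewrite (@sumdiag _ _ (fun j => x i 0 * x j 0 - sc e i * sc e j * x i 0 * x j 0)); congr (_ - _); ring.
have E2 : \sum_i \sum_j (e i j)%:R * (sc e i * x i 0 - sc e j * x j 0) ^+ 2 =
   \sum_i \sum_j (e i j)%:R * (sc e i ^+ 2 * x i 0 ^+ 2)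
   + \sum_i \sum_j (e i j)%:R * (sc e j ^+ 2 * x j 0 ^+ 2)
   - (\sum_i \sum_j (e i j)%:R * (sc e i * sc e j * x i 0 * x j 0)) *+ 2.
  rewrite -sumrMnl -big_split -sumrB; apply eq_bigr => i _ /=.
  rewrite -sumrMnl -big_split -sumrB; apply eq_bigr => j _; rewrite /=; ring.
have E3 : \sum_i \sum_j (e i j)%:R * (sc e j ^+ 2 * x j 0 ^+ 2) =
          \sum_i \sum_j (e i j)%:R * (sc e i ^+ 2 * x i 0 ^+ 2).
  rewrite exchange_big; apply eq_bigr => i _; apply eq_bigr => j _.
  by case: Hg => Hsym _; rewrite Hsym.
have E4 : \sum_i \sum_j (e i j)%:R * (sc e i ^+ 2 * x i 0 ^+ 2) =
          \sum_i (x i 0 ^+ 2 * (1 - sc e i ^+ 2)).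
  apply eq_bigr => i _; rewrite -big_distrl /= -Hd -Hs; ring.
rewrite E2 E3 E4 E1; ring.
Qed.

Lemma relu_hom (R : realDomainType) (a b s u : R) :
  0 < s -> abReLU a b (s * u) = s * abReLU a b u.
Proof.
move=> hs; rewrite /abReLU pmulr_rge0 //.
by case: ifP => _; rewrite mulrCA.
Qed.

Lemma pt (R : realFieldType) (a b u v : R) : 0 <= a -> 0 <= b ->
  (abReLU a b u - abReLU a b v) ^+ 2 + (abReLU a b (- u) - abReLU a b (- v)) ^+ 2
  <= (a ^+ 2 + b ^+ 2) * (u - v) ^+ 2.
Proof.
move=> ha hb; rewrite /abReLU !oppr_ge0.
have hab := mulr_ge0 (sqr_ge0 (a - b)) (mulr_ge0 ha hb).
have [hu|hu] := lerP 0 u; have [hu'|hu'] := lerP u 0;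
have [hv|hv] := lerP 0 v; have [hv'|hv'] := lerP v 0;
  try (have -> : u = 0 by lra); try (have -> : v = 0 by lra); rewrite ?oppr0 ?mulr0 ?subr0 ?sub0r ?sqrrN ?exprMn; try nra.
  all: have h2 : 0 <= -(u*v) by nra.
  all: have h3 := mulr_ge0 (sqr_ge0 (a-b)) h2; nra.
Qed.

Lemma sc_gt0 (R : rcfType) n (e : rel 'I_n) i : 0 < sc e i :> R.
Proof.
rewrite /sc invr_gt0 sqrtr_gt0 ltr_wpDl //.
by rewrite /deg; apply: sumr_ge0 => j _; rewrite mxE ler0n.
Qed.

Theorem mainTheorem12 (R : rcfType) (n : nat) (e : rel 'I_n)
  (Hg : simple_graph e) (alpha beta : R)
  (Ha : 0 <= alpha) (Hb : 0 <= beta) (Hab : (alpha != 0) || (beta != 0))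
  (h : 'cV[R]_n) :
  Dir e (map_mx (abReLU alpha beta) h) + Dir e (map_mx (abReLU alpha beta) (- h))
  <= (alpha ^+ 2 + beta ^+ 2) * Dir e h.
Proof.
rewrite -(ler_pMn2r (n:=2)) // mulrnDl -mulrnAr !key //.
rewrite -big_split mulr_sumr; apply ler_sum => i _.
rewrite -big_split mulr_sumr; apply ler_sum => j _ /=.
rewrite !mxE.
case: (e i j) => /=; last by rewrite !mul0r addr0 mulr0.
rewrite !mul1r.
have := @pt _ alpha beta (sc e i * h i 0) (sc e j * h j 0) Ha Hb.
rewrite -[- (sc e i * h i 0)]mulrN -[- (sc e j * h j 0)]mulrN !relu_hom ?sc_gt0 //.
Qed.
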